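(* A thermostat $(M,g,\lambda)$ has no conjugate points if and only if for every $v\in SM$, every $T>0$ and every piecewise $\mathcal{C}^2$ function $f:[-T,T]\to\mathbb{R}$ with $f(-T)=f(T)=0$, one has $I_v(f)\ge0$, with equality if and only if $f\equiv0$.
   Context: Setup: $(M,g)$ closed oriented Riemannian surface, $\pi:SM\to M$ its unit tangent bundle, $\lambda\in\mathcal{C}^\infty(SM,\mathbb{R})$, thermostat flow $\varphi_t$ on $SM$ (flow of unit-speed curves with $\nabla_{\dot\gamma}\dot\gamma=\lambda(\gamma,\dot\gamma)J\dot\gamma$), generator $F=X+\lambda V$ with $X$ geodesic vector field, $V$ vertical vector field, $H:=[V,X]$. Exponential map $\exp^\lambda_x(tv):=\pi(\varphi_t(x,v))$, $t\ge0$; the thermostat has no conjugate points if every $\exp^\lambda_x$ is a local diffeomorphism of $T_xM$. Thermostat curvature $\mathbb{K}:=\pi^*K_g-H\lambda+\lambda^2+F(V\lambda)$ ($K_g$ Gaussian curvature), damped thermostat curvature $\tilde\kappa:=\mathbb{K}-\tfrac12F(V\lambda)-\tfrac14(V\lambda)^2$, $\tilde\kappa_v(t):=\tilde\kappa(\varphi_t(v))$. Index form: $I_v(f):=\int_{-T}^T(\dot f^2-\tilde\kappa_v f^2)\,dt$. Known fact (may be used): the thermostat has no conjugate points iff for every $v\in SM$ every non-trivial solution of $\ddot z+\tilde\kappa_v(t)z=0$ on $\mathbb{R}$ vanishes at most once. *)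

(* Defs.v *)
From Stdlib Require Import Reals.
From Coquelicot Require Import Coquelicot.
Open Scope R_scope.

(* Abstraction of the thermostat: only the damped thermostat curvature along
   orbits enters the statement.  For v in SM, [kappa v t] stands for
   tilde-kappa_v(t) = tilde-kappa(phi_t(v)). *)

Definition jacobi_solution (k : R -> R) (z z1 z2 : R -> R) : Prop :=
  forall t, is_derive z t (z1 t) /\ is_derive z1 t (z2 t) /\ z2 t + k t * z t = 0.

(* No conjugate points, via the known characterization given in the context:
   for every v, every non-trivial solution of z'' + kappa_v z = 0 on R
   vanishes at most once. *)
Definition no_conjugate_points {SM : Type} (kappa : SM -> R -> R) : Prop :=
  forall (v : SM) (z z1 z2 : R -> R),
    jacobi_solution (kappa v) z z1 z2 ->
    (exists t, z t <> 0) ->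
    forall t1 t2, z t1 = 0 -> z t2 = 0 -> t1 = t2.

Definition C2_with (g g1 g2 : R -> R) : Prop :=
  forall x, is_derive g x (g1 x) /\ is_derive g1 x (g2 x) /\ continuous g2 x.

(* Representation of a piecewise C^2 function f on [-T,T]: a partition
   -T = t 0 < t 1 < ... < t n = T and C^2 functions g i (with derivatives
   g1 i, g2 i) such that f = g i on [t i, t (i+1)].  (A C^2 function on a
   closed interval always extends to a C^2 function on R.) *)
Definition pw_C2_rep (T : R) (f : R -> R) (n : nat) (t : nat -> R)
  (g g1 g2 : nat -> R -> R) : Prop :=
  (0 < n)%nat /\ t O = - T /\ t n = T /\
  (forall i, (i < n)%nat -> t i < t (S i)) /\
  (forall i, (i < n)%nat -> C2_with (g i) (g1 i) (g2 i)) /\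
  (forall i, (i < n)%nat -> forall x, t i <= x <= t (S i) -> f x = g i x).

Fixpoint sum_lt (n : nat) (a : nat -> R) : R :=
  match n with O => 0 | S m => sum_lt m a + a m end.

Definition index_form (k : R -> R) (n : nat) (t : nat -> R)
  (g g1 : nat -> R -> R) : R :=
  sum_lt n (fun i => RInt (fun s => (g1 i s) ^ 2 - k s * (g i s) ^ 2) (t i) (t (S i))).

(* Main.v *)
Require Import Defs.
From Stdlib Require Import Reals.
From Coquelicot Require Import Coquelicot.
From Stdlib Require Import Lra Lia Arith Classical.
Open Scope R_scope.

Lemma der_mult (f g : R -> R) x df dg : is_derive f x df -> is_derive g x dg ->
  is_derive (fun y => f y * g y) x (df * g x + f x * dg).
Proof. intros. apply (is_derive_mult f g x df dg); auto. intros; apply Rmult_comm. Qed.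

Lemma der_plus (f g : R -> R) x df dg : is_derive f x df -> is_derive g x dg ->
  is_derive (fun y => f y + g y) x (df + dg).
Proof. intros. apply (is_derive_plus f g x df dg); auto. Qed.

Lemma der_opp (f : R -> R) x df : is_derive f x df -> is_derive (fun y => - f y) x (- df).
Proof. intros. apply (is_derive_opp f x df); auto. Qed.

Lemma der_const (c x : R) : is_derive (fun _ => c) x 0.
Proof. apply (is_derive_const c x). Qed.

Lemma der_id (x : R) : is_derive (fun y => y) x 1.
Proof. apply (is_derive_id x). Qed.

Lemma der_inv (f : R -> R) x df : is_derive f x df -> f x <> 0 ->
  is_derive (fun y => / f y) x (- df / (f x ^ 2)).
Proof. intros; apply is_derive_inv; auto. Qed.

Lemma der_ext (f g : R -> R) x l : (forall y, f y = g y) -> is_derive f x l -> is_derive g x l.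
Proof. intros H D. apply (is_derive_ext f g); auto. Qed.

Lemma der_val (f : R -> R) (x l l' : R) : is_derive f x l -> l = l' -> is_derive f x l'.
Proof. intros; subst; auto. Qed.

Lemma cont_mult (f g : R -> R) x : continuous f x -> continuous g x -> continuous (fun y => f y * g y) x.
Proof. intros. apply (continuous_mult f g x); auto. Qed.

Lemma cont_plus (f g : R -> R) x : continuous f x -> continuous g x -> continuous (fun y => f y + g y) x.
Proof. intros. apply (continuous_plus f g x); auto. Qed.

Lemma cont_opp (f : R -> R) x : continuous f x -> continuous (fun y => - f y) x.
Proof. intros. apply (continuous_opp f x); auto. Qed.

Lemma cont_minus (f g : R -> R) x : continuous f x -> continuous g x -> continuous (fun y => f y - g y) x.
Proof. intros. apply cont_plus; auto. apply cont_opp; auto. Qed.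

Lemma cont_const (c x : R) : continuous (fun _ => c) x.
Proof. apply continuous_const. Qed.

Lemma cont_inv (f : R -> R) x : continuous f x -> f x <> 0 -> continuous (fun y => / f y) x.
Proof. intros; apply continuous_Rinv_comp; auto. Qed.

Lemma cont_ext (f g : R -> R) x : (forall y, f y = g y) -> continuous f x -> continuous g x.
Proof. intros H C. apply (continuous_ext f g); auto. Qed.

Lemma cont_der (f : R -> R) x l : is_derive f x l -> continuous f x.
Proof. intros D. apply (ex_derive_continuous (K:=R_AbsRing) (V:=R_NormedModule)). exists l; auto. Qed.

Lemma cont_sq (f : R -> R) x : continuous f x -> continuous (fun y => f y ^ 2) x.
Proof. intros. apply cont_ext with (fun y => f y * f y). intros; ring. apply cont_mult; auto. Qed.

Lemma cont_abs (f : R -> R) x : continuous f x -> continuous (fun y => Rabs (f y)) x.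
Proof. intros. apply (continuous_comp f Rabs); auto. apply continuous_Rabs. Qed.

Lemma RIntv_plus (f g : R -> R) a b If Ig : is_RInt f a b If -> is_RInt g a b Ig ->
  is_RInt (fun y => f y + g y) a b (If + Ig).
Proof. intros. apply (is_RInt_plus f g a b If Ig); auto. Qed.

Lemma RInt_FTC (F f : R -> R) a b :
  (forall x, Rmin a b <= x <= Rmax a b -> is_derive F x (f x)) ->
  (forall x, Rmin a b <= x <= Rmax a b -> continuous f x) ->
  is_RInt f a b (F b - F a).
Proof. intros. apply (is_RInt_derive F f a b); auto. Qed.

Lemma RInt_zero (a b : R) : RInt (fun _ => 0) a b = 0.
Proof. rewrite RInt_const. unfold scal; simpl. unfold mult; simpl. ring. Qed.

Lemma exRInt_cont (f : R -> R) a b :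
  (forall z, Rmin a b <= z <= Rmax a b -> continuous f z) -> ex_RInt f a b.
Proof. intros. apply (ex_RInt_continuous (V:=R_CompleteNormedModule)); auto. Qed.

Lemma RInt_chasles (f : R -> R) a b c : ex_RInt f a b -> ex_RInt f b c ->
  RInt f a b + RInt f b c = RInt f a c.
Proof. intros. apply (RInt_Chasles (V:=R_CompleteNormedModule)); auto. Qed.

Lemma ballR (x e y : R) : ball x e y -> x - e < y < x + e.
Proof. intros H. unfold ball in H; simpl in H; unfold AbsRing_ball, abs, minus, plus, opp in H; simpl in H.
  apply Rabs_def2 in H. lra. Qed.

Lemma deriv_zero_interior (g : R -> R) lo hi s d :
  (forall y, lo < y < hi -> g y = 0) -> lo < s < hi -> is_derive g s d -> d = 0.
Proof.
  intros Hg Hs D.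
  assert (D0 : is_derive g s 0).
  { apply (is_derive_ext_loc (fun _ => 0) g s 0).
    assert (He : 0 < Rmin (s - lo) (hi - s)) by (apply Rmin_glb_lt; lra).
    exists (mkposreal _ He). intros y Hy. apply ballR in Hy. simpl in Hy.
    symmetry; apply Hg. pose proof (Rmin_l (s-lo) (hi-s)). pose proof (Rmin_r (s-lo) (hi-s)). lra.
    apply der_const. }
  apply is_derive_unique in D. apply is_derive_unique in D0. congruence.
Qed.

Lemma RInt_zero_nonneg (Q : R -> R) lo hi :
  lo < hi -> (forall x, lo <= x <= hi -> continuous Q x) ->
  (forall x, lo <= x <= hi -> 0 <= Q x) -> RInt Q lo hi = 0 ->
  forall x, lo <= x <= hi -> Q x = 0.
Proof.
  intros Hlh Hc Hn HI x0 Hx0.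
  destruct (Req_dec (Q x0) 0) as [E|E]; auto. exfalso.
  assert (P : 0 < Q x0) by (pose proof (Hn x0 Hx0); lra).
  assert (L : locally x0 (fun y => Q x0 / 2 < Q y)).
  { apply (Hc x0 Hx0 (fun y => Q x0 / 2 < y)).
    assert (He : 0 < Q x0 / 2) by lra.
    exists (mkposreal _ He). intros y Hy. apply ballR in Hy. simpl in Hy. lra. }
  destruct L as [d Hd].
  set (c := Rmax lo (x0 - d/2)). set (e := Rmin hi (x0 + d/2)).
  pose proof (cond_pos d) as dp.
  assert (Hc1 : lo <= c) by apply Rmax_l.
  assert (He1 : e <= hi) by apply Rmin_l.
  assert (Hce : c < e).
  { unfold c, e. unfold Rmax, Rmin. destruct (Rle_dec lo (x0 - d/2)); destruct (Rle_dec hi (x0 + d/2)); lra. }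
  assert (Hcx : c <= x0 /\ x0 <= e).
  { unfold c, e. unfold Rmax, Rmin. destruct (Rle_dec lo (x0 - d/2)); destruct (Rle_dec hi (x0 + d/2)); lra. }
  assert (Hin : forall y, c <= y <= e -> Q x0 / 2 < Q y).
  { intros y Hy. apply Hd. unfold ball; simpl; unfold AbsRing_ball, abs, minus, plus, opp; simpl.
    assert (x0 - d/2 <= c) by apply Rmax_r. assert (e <= x0 + d/2) by apply Rmin_r.
    apply Rabs_def1; lra. }
  assert (Ex : forall a b, lo <= a -> a <= b -> b <= hi -> ex_RInt Q a b).
  { intros a b H1 H2 H3. apply exRInt_cont. intros z Hz. apply Hc.
    rewrite Rmin_left in Hz by lra. rewrite Rmax_right in Hz by lra. lra. }
  assert (I1 : 0 <= RInt Q lo c).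
  { apply RInt_ge_0; auto. apply Ex; lra. intros; apply Hn; lra. }
  assert (I3 : 0 <= RInt Q e hi).
  { apply RInt_ge_0; auto. apply Ex; lra. intros; apply Hn; lra. }
  assert (I2 : 0 < RInt Q c e).
  { apply RInt_gt_0; auto. intros y Hy. pose proof (Hin y (conj (Rlt_le _ _ (proj1 Hy)) (Rlt_le _ _ (proj2 Hy)))). lra.
    intros; apply Hc; lra. }
  assert (S1 := RInt_chasles Q lo c e (Ex lo c (Rle_refl _) Hc1 (Rlt_le _ _ (Rlt_le_trans _ _ _ Hce He1))) (Ex c e Hc1 (Rlt_le _ _ Hce) He1)).
  assert (S2 := RInt_chasles Q lo e hi (Ex lo e (Rle_refl _) (Rlt_le _ _ (Rle_lt_trans _ _ _ Hc1 Hce)) He1) (Ex e hi (Rlt_le _ _ (Rle_lt_trans _ _ _ Hc1 Hce)) He1 (Rle_refl _))).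
  lra.
Qed.

Lemma const_of_deriv0 (h : R -> R) lo hi :
  lo <= hi -> (forall x, lo <= x <= hi -> is_derive h x 0) ->
  forall x, lo <= x <= hi -> h x = h lo.
Proof.
  intros Hlh D x Hx.
  destruct (Req_dec x lo) as [E|E]. subst; auto.
  destruct (MVT_gen h lo x (fun _ => 0)) as [c [Hc Hm]].
  - intros y Hy. rewrite Rmin_left in Hy by lra. rewrite Rmax_right in Hy by lra. apply D; lra.
  - intros y Hy. rewrite Rmin_left in Hy by lra. rewrite Rmax_right in Hy by lra.
    apply continuity_pt_filterlim. apply (cont_der h y 0). apply D; lra.
  - lra.
Qed.

Lemma picone (k z z1 zz2 g g1 g2 : R -> R) lo hi :
 lo < hi ->
 (forall s, continuous k s) ->
 (forall s, is_derive z s (z1 s)) -> (forall s, is_derive z1 s (zz2 s)) ->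
 (forall s, zz2 s + k s * z s = 0) ->
 (forall s, is_derive g s (g1 s)) -> (forall s, is_derive g1 s (g2 s)) ->
 (forall s, lo <= s <= hi -> z s <> 0) ->
 RInt (fun s => g1 s ^2 - k s * g s ^2) lo hi =
   RInt (fun s => (g1 s - g s * z1 s / z s)^2) lo hi
   + (g hi ^2 * z1 hi / z hi - g lo ^2 * z1 lo / z lo) /\
 0 <= RInt (fun s => (g1 s - g s * z1 s / z s)^2) lo hi /\
 (forall x, lo <= x <= hi -> continuous (fun s => (g1 s - g s * z1 s / z s)^2) x).
Proof.
  intros Hlh Hk Dz Dz1 Ez Dg Dg1 Hnz.
  set (Q := fun s => (g1 s - g s * z1 s / z s)^2).
  set (P := fun s => g s ^2 * z1 s / z s).
  set (D := fun s => g1 s ^2 - k s * g s ^2 - Q s).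
  assert (CQ : forall x, lo <= x <= hi -> continuous Q x).
  { intros x Hx. unfold Q. apply cont_sq. apply cont_minus. apply (cont_der _ _ _ (Dg1 x)).
    apply cont_ext with (fun s => g s * z1 s * / z s). intros; unfold Rdiv; ring.
    apply cont_mult. apply cont_mult. apply (cont_der _ _ _ (Dg x)). apply (cont_der _ _ _ (Dz1 x)).
    apply cont_inv. apply (cont_der _ _ _ (Dz x)). apply Hnz; auto. }
  assert (CD : forall x, lo <= x <= hi -> continuous D x).
  { intros x Hx. unfold D. apply cont_minus; auto. apply cont_minus.
    apply cont_sq. apply (cont_der _ _ _ (Dg1 x)).
    apply cont_mult. auto. apply cont_sq. apply (cont_der _ _ _ (Dg x)). }
  assert (DP : forall x, lo <= x <= hi -> is_derive P x (D x)).
  { intros x Hx. pose proof (Hnz x Hx) as nz.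
    apply der_ext with (fun s => g s ^ 2 * z1 s * / z s). intros; unfold P, Rdiv; ring.
    eapply der_val. apply der_mult. apply der_mult. apply (is_derive_pow g 2 x (g1 x)); auto.
    apply Dz1. apply der_inv. apply Dz. auto.
    unfold D, Q. assert (E : zz2 x = - k x * z x) by (pose proof (Ez x); lra).
    rewrite E. simpl. field. auto. }
  assert (EQ : ex_RInt Q lo hi).
  { apply exRInt_cont. intros z0 Hz. rewrite Rmin_left in Hz by lra. rewrite Rmax_right in Hz by lra. auto. }
  assert (IQ : is_RInt Q lo hi (RInt Q lo hi)) by (apply (RInt_correct (V:=R_CompleteNormedModule)); auto).
  assert (ID : is_RInt D lo hi (P hi - P lo)).
  { apply RInt_FTC; intros x Hx; rewrite Rmin_left in Hx by lra; rewrite Rmax_right in Hx by lra; auto. }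
  pose proof (RIntv_plus _ _ _ _ _ _ IQ ID) as IS.
  split; [|split; auto].
  - apply is_RInt_unique. apply (is_RInt_ext (fun y => Q y + D y)).
    intros; unfold D; lra. exact IS.
  - apply RInt_ge_0; auto. lra. intros; unfold Q; apply pow2_ge_0.
Qed.

Lemma der_expl (C x : R) : is_derive (fun s => exp (C * s)) x (C * exp (C * x)).
Proof. auto_derive. auto. ring. Qed.

Lemma gron (E dE : R -> R) a b C :
  (forall s, Rmin a b <= s <= Rmax a b -> is_derive E s (dE s)) ->
  (forall s, Rmin a b <= s <= Rmax a b -> Rabs (dE s) <= C * E s) ->
  (forall s, 0 <= E s) -> E a = 0 -> E b = 0.
Proof.
  intros D B P Ea.
  destruct (Rle_lt_dec a b) as [Hab|Hab].
  - set (h := fun s => E s * exp (-C * s)).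
    destruct (MVT_gen h a b (fun s => dE s * exp (-C*s) + E s * (-C * exp (-C * s)))) as [c [Hc Hm]].
    + intros y Hy. unfold h. apply (der_mult E (fun s => exp (_ * s))). apply D; lra. apply der_expl.
    + intros y Hy. apply continuity_pt_filterlim. eapply cont_der. unfold h. apply (der_mult E (fun s => exp (_ * s))). apply D; lra. apply der_expl.
    + unfold h in Hm. rewrite Ea in Hm.
      rewrite Rmin_left in Hc by lra. rewrite Rmax_right in Hc by lra.
      rewrite Rmin_left in B by lra. rewrite Rmax_right in B by lra.
      pose proof (B c Hc) as Bc. apply Rabs_le_between in Bc.
      pose proof (exp_pos (-C*c)). pose proof (exp_pos (-C*b)). pose proof (P b).
      assert (X : (dE c * exp (- C * c) + E c * (- C * exp (- C * c))) * (b - a) <= 0).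
      { apply Rmult_le_0_r. 2: lra.
        replace (dE c * exp (- C * c) + E c * (- C * exp (- C * c))) with ((dE c - C * E c) * exp (-C*c)) by ring.
        apply Rmult_le_0_r; lra. }
      assert (E b * exp (-C*b) <= 0) by lra.
      assert (E b * exp (-C*b) >= 0) by (apply Rle_ge, Rmult_le_pos; lra).
      assert (Z : E b * exp (-C*b) = 0) by lra.
      apply Rmult_integral in Z. destruct Z; auto. lra.
  - set (h := fun s => E s * exp (C * s)).
    destruct (MVT_gen h a b (fun s => dE s * exp (C*s) + E s * (C * exp (C * s)))) as [c [Hc Hm]].
    + intros y Hy. unfold h. apply (der_mult E (fun s => exp (_ * s))). apply D; lra. apply der_expl.
    + intros y Hy. apply continuity_pt_filterlim. eapply cont_der. unfold h. apply (der_mult E (fun s => exp (_ * s))). apply D; lra. apply der_expl.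
    + unfold h in Hm. rewrite Ea in Hm.
      rewrite Rmin_right in Hc by lra. rewrite Rmax_left in Hc by lra.
      rewrite Rmin_right in B by lra. rewrite Rmax_left in B by lra.
      pose proof (B c Hc) as Bc. apply Rabs_le_between in Bc.
      pose proof (exp_pos (C*c)). pose proof (exp_pos (C*b)). pose proof (P b).
      assert (X : (dE c * exp (C * c) + E c * (C * exp (C * c))) * (b - a) <= 0).
      { apply Rmult_le_0_l. 2: lra.
        replace (dE c * exp (C * c) + E c * (C * exp (C * c))) with ((dE c + C * E c) * exp (C*c)) by ring.
        apply Rmult_le_pos; lra. }
      assert (E b * exp (C*b) <= 0) by lra.
      assert (E b * exp (C*b) >= 0) by (apply Rle_ge, Rmult_le_pos; lra).
      assert (Z : E b * exp (C*b) = 0) by lra.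
      apply Rmult_integral in Z. destruct Z; auto. lra.
Qed.

Lemma bound_abs (k : R -> R) a b : a <= b -> (forall s, continuous k s) ->
  exists M, 0 <= M /\ forall s, a <= s <= b -> Rabs (k s) <= M.
Proof.
  intros Hab Hk.
  destruct (continuity_ab_maj (fun s => Rabs (k s)) a b Hab) as [Mx [HM _]].
  intros c _. apply continuity_pt_filterlim. apply cont_abs. auto.
  exists (Rabs (k Mx)). split. apply Rabs_pos. auto.
Qed.

Lemma uniq (k z z1 z2 : R -> R) m :
 (forall s, continuous k s) -> (forall s, is_derive z s (z1 s)) -> (forall s, is_derive z1 s (z2 s)) ->
 (forall s, z2 s + k s * z s = 0) -> z m = 0 -> z1 m = 0 -> forall t, z t = 0.
Proof.
  intros Hk Dz Dz1 Ez zm z1m t.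
  destruct (bound_abs k (Rmin m t) (Rmax m t) (Rmin_Rmax _ _) Hk) as [M [M0 HM]].
  set (E := fun s => z s ^ 2 + z1 s ^ 2).
  assert (EZ : E t = 0).
  { apply (gron E (fun s => 2 * z s * z1 s + 2 * z1 s * z2 s) m t (1 + M)).
    - intros s _. unfold E. eapply der_val. apply der_plus.
      apply (is_derive_pow z 2 s (z1 s)); auto. apply (is_derive_pow z1 2 s (z2 s)); auto.
      simpl; ring.
    - intros s Hs. unfold E. pose proof (HM s Hs) as Hks.
      assert (E2 : z2 s = - k s * z s) by (pose proof (Ez s); lra). rewrite E2.
      replace (2 * z s * z1 s + 2 * z1 s * (- k s * z s)) with ((2 * z s * z1 s) * (1 - k s)) by ring.
      rewrite Rabs_mult.
      assert (A1 : Rabs (2 * z s * z1 s) <= z s ^ 2 + z1 s ^ 2).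
      { rewrite !Rabs_mult. rewrite Rabs_right by lra.
        pose proof (pow2_ge_0 (Rabs (z s) - Rabs (z1 s))).
        rewrite <- (pow2_abs (z s)), <- (pow2_abs (z1 s)). nra. }
      assert (A2 : Rabs (1 - k s) <= 1 + M).
      { eapply Rle_trans. apply Rabs_triang. rewrite Rabs_Ropp, Rabs_R1. lra. }
      replace ((1 + M) * (z s ^ 2 + z1 s ^ 2)) with ((z s ^ 2 + z1 s ^ 2) * (1 + M)) by ring.
      apply Rmult_le_compat; auto; apply Rabs_pos.
    - intros s; unfold E. pose proof (pow2_ge_0 (z s)); pose proof (pow2_ge_0 (z1 s)); lra.
    - unfold E. rewrite zm, z1m. ring. }
  unfold E in EZ. pose proof (pow2_ge_0 (z t)); pose proof (pow2_ge_0 (z1 t)).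
  assert (Z2 : z t ^ 2 = 0) by lra. simpl in Z2. rewrite Rmult_1_r in Z2. apply Rmult_integral in Z2; tauto.
Qed.

Lemma FTC1 (f : R -> R) a x : (forall s, continuous f s) ->
  is_derive (fun t => RInt f a t) x (f x).
Proof.
  intros Hc. apply (is_derive_RInt (V:=R_CompleteNormedModule) f (fun t => RInt f a t) a x); auto.
  exists (mkposreal 1 Rlt_0_1). intros y _.
  apply (RInt_correct (V:=R_CompleteNormedModule)). apply exRInt_cont. auto.
Qed.

Lemma RInt_pos_part (h : R -> R) C m t : 0 <= t -> (forall s, continuous h s) ->
  (forall s, 0 <= s <= t -> Rabs (h s) <= C * s ^ m) ->
  Rabs (RInt h 0 t) <= C * t ^ (S m) / INR (S m).
Proof.
  intros Ht Hc Hb.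
  assert (EX : forall f : R -> R, (forall s, continuous f s) -> ex_RInt f 0 t) by (intros; apply exRInt_cont; auto).
  eapply Rle_trans. apply abs_RInt_le; auto.
  assert (IP : is_RInt (fun s => C * s ^ m) 0 t (C * t ^ (S m) / INR (S m) - C * 0 ^ (S m) / INR (S m))).
  { apply (RInt_FTC (fun s => C * s ^ (S m) / INR (S m))).
    - intros x _. eapply der_val. apply der_ext with (fun s => (C / INR (S m)) * s ^ (S m)).
      intros; unfold Rdiv; ring. apply (der_mult (fun _ => C / INR (S m)) (fun s => s ^ (S m))).
      apply der_const. apply (is_derive_pow (fun s => s) (S m) x 1). apply der_id.
      simpl pred. assert (0 < INR (S m)) by (apply lt_0_INR; lia). field. lra.
    - intros x _. apply cont_mult. apply cont_const. apply cont_ext with (fun s => s ^ m). auto.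
      apply (cont_der _ _ _ (is_derive_pow (fun s => s) m x 1 (der_id x))). }
  replace (C * t ^ S m / INR (S m)) with (C * t ^ S m / INR (S m) - C * 0 ^ S m / INR (S m))
    by (rewrite pow_i by lia; unfold Rdiv; ring).
  rewrite <- (is_RInt_unique _ _ _ _ IP).
  apply RInt_le; auto. apply EX. intros; apply cont_abs; auto.
  apply EX. intros; apply cont_mult. apply cont_const.
  apply (cont_der _ _ _ (is_derive_pow (fun s => s) m s 1 (der_id s))).
  intros; apply Hb; lra.
Qed.

Lemma RInt_bound (h : R -> R) C m t : (forall s, continuous h s) ->
  (forall s, Rabs s <= Rabs t -> Rabs (h s) <= C * Rabs s ^ m) ->
  Rabs (RInt h 0 t) <= C * Rabs t ^ (S m) / INR (S m).
Proof.
  intros Hc Hb.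
  destruct (Rle_lt_dec 0 t) as [Ht|Ht].
  - rewrite (Rabs_right t) by lra. apply RInt_pos_part; auto.
    intros s Hs. replace (s ^ m) with (Rabs s ^ m) by (rewrite Rabs_right; lra). apply Hb. rewrite !Rabs_right; lra.
  - assert (E : RInt h 0 t = RInt (fun y => - h (- y)) 0 (- t)).
    { symmetry. apply is_RInt_unique.
      apply (is_RInt_comp_opp (V:=R_NormedModule) h 0 (-t)).
      rewrite Ropp_0, Ropp_involutive. apply (RInt_correct (V:=R_CompleteNormedModule)).
      apply exRInt_cont; auto. }
    rewrite E. rewrite (Rabs_left t) by lra. apply RInt_pos_part. lra.
    intros s. apply cont_opp. apply (continuous_comp (fun y => - y) h). apply cont_opp.
    apply (continuous_id (U:=R_UniformSpace)). auto.
    intros s Hs. rewrite Rabs_Ropp. replace (s ^ m) with (Rabs (- s) ^ m) by (rewrite Rabs_Ropp, Rabs_right; lra).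
    apply Hb. rewrite Rabs_Ropp, Rabs_right, Rabs_left; lra.
Qed.

Fixpoint uw (k : R -> R) (n : nat) : (R -> R) * (R -> R) :=
  match n with
  | O => (fun t => t, fun _ => 1)
  | S m => let w := fun t => - RInt (fun s => k s * fst (uw k m) s) 0 t in
           (fun t => RInt w 0 t, w)
  end.
Definition uu k n := fst (uw k n).
Definition ww k n := snd (uw k n).
Definition wd (k : R -> R) n t := match n with O => 0 | S m => - (k t * uu k m t) end.

Lemma uw_der (k : R -> R) : (forall s, continuous k s) -> forall n t,
  is_derive (uu k n) t (ww k n t) /\ is_derive (ww k n) t (wd k n t) /\ continuous (wd k n) t.
Proof.
  intros Hk n. induction n as [|n IH]; intros t.
  - simpl. unfold uu, ww; simpl. split; [apply der_id|split; [apply der_const|apply cont_const]].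
  - assert (Cu : forall s, continuous (uu k n) s) by (intros s; apply (cont_der _ _ _ (proj1 (IH s)))).
    assert (Dw : forall s, is_derive (ww k (S n)) s (wd k (S n) s)).
    { intros s. unfold ww, wd; simpl. apply der_opp.
      apply (FTC1 (fun s => k s * fst (uw k n) s)). intros; apply cont_mult; [auto|apply Cu]. }
    split; [|split; auto].
    + change (is_derive (fun t => RInt (ww k (S n)) 0 t) t (ww k (S n) t)). apply FTC1. intros s. apply (cont_der _ _ _ (Dw s)).
    + unfold wd. apply cont_opp. apply cont_mult; auto.
Qed.

Lemma uu0 k n : uu k n 0 = 0.
Proof. destruct n; unfold uu; simpl. auto. apply (RInt_point (V:=R_CompleteNormedModule)). Qed.

Lemma ww0 k n : ww k n 0 = match n with O => 1 | _ => 0 end.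
Proof. destruct n; unfold ww; simpl. auto. rewrite (RInt_point (V:=R_CompleteNormedModule)). simpl. unfold zero; simpl. ring. Qed.

Lemma uw_bound (k : R -> R) L M : (forall s, continuous k s) -> 0 <= M ->
  (forall s, Rabs s <= L -> Rabs (k s) <= M) -> forall n t, Rabs t <= L ->
  Rabs (uu k n t) <= M ^ n * Rabs t ^ (S (2 * n)) / INR (fact (S (2 * n))) /\
  Rabs (ww k n t) <= M ^ n * Rabs t ^ (2 * n) / INR (fact (2 * n)).
Proof.
  intros Hk M0 HM n. induction n as [|n IH]; intros t Ht.
  - unfold uu, ww; simpl. rewrite Rabs_R1. split; lra.
  - pose proof (uw_der k Hk n) as D.
    assert (Cu : forall s, continuous (uu k n) s) by (intros s; apply (cont_der _ _ _ (proj1 (D s)))).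
    assert (Bw : forall t, Rabs t <= L -> Rabs (ww k (S n) t) <= M ^ S n * Rabs t ^ (2 * S n) / INR (fact (2 * S n))).
    { intros t0 Ht0. unfold ww; simpl snd. rewrite Rabs_Ropp.
      replace (2 * S n)%nat with (S (S (2 * n))) by lia.
      eapply Rle_trans. apply (RInt_bound _ (M * (M ^ n / INR (fact (S (2 * n)))))).
      intros; apply cont_mult; [auto|apply Cu].
      intros s Hs. rewrite Rabs_mult. destruct (IH s ltac:(apply Rle_trans with (Rabs t0); lra)) as [IHu _]. fold (uu k n).
      replace (M * (M ^ n / INR (fact (S (2 * n)))) * Rabs s ^ S (2 * n))
        with (M * (M ^ n * Rabs s ^ S (2 * n) / INR (fact (S (2 * n))))) by (unfold Rdiv; ring).
      apply Rmult_le_compat; auto using Rabs_pos. apply HM; lra.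
      right. change (fact (S (S (2*n)))) with (S (S (2*n)) * fact (S (2*n)))%nat.
      rewrite mult_INR. simpl pow. field. split. apply not_0_INR, fact_neq_0. apply not_0_INR; lia. }
    split; auto.
    unfold uu; simpl fst.
    replace (S (2 * S n)) with (S (S (S (2 * n)))) by lia.
    eapply Rle_trans. apply (RInt_bound _ (M ^ S n / INR (fact (2 * S n)))).
    intros s. apply (cont_der _ _ _ (proj1 (proj2 (uw_der k Hk (S n) s)))).
    intros s Hs. fold (ww k (S n)).
    replace (M ^ S n / INR (fact (2 * S n)) * Rabs s ^ (2 * S n)) with (M ^ S n * Rabs s ^ (2 * S n) / INR (fact (2 * S n))) by (unfold Rdiv; ring).
    apply Bw; lra.
    right. replace (2 * S n)%nat with (S (S (2 * n))) by lia.
    change (fact (S (S (S (2*n))))) with (S (S (S (2*n))) * fact (S (S (2*n))))%nat.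
    rewrite mult_INR. field. split. apply not_0_INR, fact_neq_0. apply not_0_INR; lia.
Qed.

Lemma exs_le (a b : nat -> R) : (forall n, Rabs (a n) <= b n) -> ex_series b -> ex_series a.
Proof. intros H E. apply (ex_series_le (K:=R_AbsRing) (V:=R_CompleteNormedModule) a b); auto. Qed.

Lemma exs_exp (x c : R) : ex_series (fun n => c * (x ^ n / INR (fact n))).
Proof.
  assert (E : ex_series (fun n => x ^ n / INR (fact n))).
  { exists (exp x). pose proof (is_exp_Reals x) as H. unfold is_pseries in H.
    eapply is_series_ext; [|exact H]. intros n. rewrite pow_n_pow. unfold scal; simpl. unfold mult; simpl. reflexivity. }
  apply (ex_series_scal_l (K:=R_AbsRing) (V:=R_NormedModule) c) in E. exact E.
Qed.

Lemma inv_fact_le n m : (n <= m)%nat -> / INR (fact m) <= / INR (fact n).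
Proof. intros. apply Rinv_le_contravar. apply INR_fact_lt_0. apply le_INR, fact_le; auto. Qed.

Definition Ub L M n := M ^ n * L ^ (S (2 * n)) / INR (fact (S (2 * n))).
Definition Wb L M n := M ^ n * L ^ (2 * n) / INR (fact (2 * n)).

Lemma Ub_nonneg L M n : 0 <= L -> 0 <= M -> 0 <= Ub L M n.
Proof. intros. unfold Ub. apply Rmult_le_pos. apply Rmult_le_pos; apply pow_le; auto.
  apply Rlt_le, Rinv_0_lt_compat, INR_fact_lt_0. Qed.
Lemma Wb_nonneg L M n : 0 <= L -> 0 <= M -> 0 <= Wb L M n.
Proof. intros. unfold Wb. apply Rmult_le_pos. apply Rmult_le_pos; apply pow_le; auto.
  apply Rlt_le, Rinv_0_lt_compat, INR_fact_lt_0. Qed.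

Lemma pow_rw L M n : M ^ n * L ^ (2 * n) = (M * L ^ 2) ^ n.
Proof. rewrite Rpow_mult_distr, pow_mult. reflexivity. Qed.

Lemma Ub_ex L M : 0 <= L -> 0 <= M -> ex_series (Ub L M).
Proof.
  intros. apply exs_le with (fun n => L * ((M * L ^ 2) ^ n / INR (fact n))); [|apply exs_exp].
  intros n. rewrite Rabs_pos_eq by (apply Ub_nonneg; auto). unfold Ub.
  replace (M ^ n * L ^ S (2 * n) / INR (fact (S (2 * n)))) with (L * ((M ^ n * L ^ (2*n)) * / INR (fact (S (2 * n))))) by (simpl; unfold Rdiv; ring).
  rewrite pow_rw. apply Rmult_le_compat_l; auto. apply Rmult_le_compat_l. apply pow_le. apply Rmult_le_pos; auto. apply pow_le; auto.
  apply inv_fact_le. lia.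
Qed.

Lemma Wb_ex L M : 0 <= L -> 0 <= M -> ex_series (Wb L M).
Proof.
  intros. apply exs_le with (fun n => 1 * ((M * L ^ 2) ^ n / INR (fact n))); [|apply exs_exp].
  intros n. rewrite Rabs_pos_eq by (apply Wb_nonneg; auto). unfold Wb.
  rewrite pow_rw. rewrite Rmult_1_l. apply Rmult_le_compat_l. apply pow_le. apply Rmult_le_pos; auto. apply pow_le; auto.
  apply inv_fact_le. lia.
Qed.

Definition WDb L M n := match n with O => 0 | S m => M * Ub L M m end.

Lemma WDb_ex L M : 0 <= L -> 0 <= M -> ex_series (WDb L M).
Proof.
  intros. apply ex_series_incr_1. simpl.
  pose proof (Ub_ex L M H H0) as E.
  apply (ex_series_scal_l (K:=R_AbsRing) (V:=R_NormedModule) M) in E. exact E.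
Qed.

Lemma WDb_nonneg L M n : 0 <= L -> 0 <= M -> 0 <= WDb L M n.
Proof. intros. destruct n; simpl. lra. apply Rmult_le_pos; auto. apply Ub_nonneg; auto. Qed.

Lemma all_bounds (k : R -> R) L M : (forall s, continuous k s) -> 0 <= M -> 0 <= L ->
  (forall s, Rabs s <= L -> Rabs (k s) <= M) -> forall n t, Rabs t <= L ->
  Rabs (uu k n t) <= Ub L M n /\ Rabs (ww k n t) <= Wb L M n /\ Rabs (wd k n t) <= WDb L M n.
Proof.
  intros Hk M0 L0 HM.
  assert (Hu : forall n t, Rabs t <= L -> Rabs (uu k n t) <= Ub L M n /\ Rabs (ww k n t) <= Wb L M n).
  { intros n t Ht. destruct (uw_bound k L M Hk M0 HM n t Ht) as [A B]. split.
    - eapply Rle_trans. apply A. unfold Ub. unfold Rdiv. apply Rmult_le_compat_r.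
      apply Rlt_le, Rinv_0_lt_compat, INR_fact_lt_0. apply Rmult_le_compat_l. apply pow_le; auto.
      apply pow_incr. split; auto. apply Rabs_pos.
    - eapply Rle_trans. apply B. unfold Wb. unfold Rdiv. apply Rmult_le_compat_r.
      apply Rlt_le, Rinv_0_lt_compat, INR_fact_lt_0. apply Rmult_le_compat_l. apply pow_le; auto.
      apply pow_incr. split; auto. apply Rabs_pos. }
  intros n t Ht. destruct (Hu n t Ht) as [A B]. split; auto. split; auto.
  destruct n; simpl. rewrite Rabs_R0; lra.
  rewrite Rabs_Ropp, Rabs_mult. apply Rmult_le_compat; auto using Rabs_pos. apply Hu; auto.
Qed.

Lemma exs_uncv (a : nat -> R) : ex_series a -> Un_cv (sum_f_R0 a) (Series a).
Proof. intros E. apply Series_correct in E. apply is_series_Reals in E. exact E. Qed.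

Lemma cvu_series (fn : nat -> R -> R) (An : nat -> R) (r : posreal) :
 (forall x, ex_series (fun n => fn n x)) -> ex_series An -> (forall n, 0 <= An n) ->
 (forall n y, Boule 0 r y -> Rabs (fn n y) <= An n) ->
 CVU (SP fn) (fun x => Series (fun n => fn n x)) 0 r.
Proof.
  intros Hex HA HA0 Hb.
  pose (cv := fun x => exist (fun l => Un_cv (fun N => SP fn N x) l) (Series (fun n => fn n x)) (exs_uncv _ (Hex x))).
  assert (HA' : ex_series (fun k => Rabs (An k))).
  { apply ex_series_ext with An; auto. intros; rewrite Rabs_pos_eq; auto. }
  apply CVU_ext_lim with (SFL fn cv).
  apply (CVN_CVU fn cv r (existT _ An (exist _ (Series (fun k => Rabs (An k))) (conj (exs_uncv _ HA') Hb)))).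
  intros; reflexivity.
Qed.

Lemma SP_der (fn dn : nat -> R -> R) x : (forall n, is_derive (fn n) x (dn n x)) ->
  forall N, is_derive (SP fn N) x (SP dn N x).
Proof.
  intros D N. induction N as [|N IH].
  - unfold SP; simpl. apply der_ext with (fn 0%nat). intros; reflexivity. apply D.
  - unfold SP; simpl. apply der_plus. exact IH. apply D.
Qed.

Lemma bound_sym (k : R -> R) L : 0 <= L -> (forall s, continuous k s) ->
  exists M, 0 <= M /\ forall s, Rabs s <= L -> Rabs (k s) <= M.
Proof.
  intros L0 Hk. destruct (bound_abs k (-L) L ltac:(lra) Hk) as [M [M0 HM]].
  exists M. split; auto. intros s Hs. apply HM. apply Rabs_le_between in Hs. lra.
Qed.

Lemma exs_pt (k : R -> R) x : (forall s, continuous k s) ->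
  ex_series (fun n => uu k n x) /\ ex_series (fun n => ww k n x) /\ ex_series (fun n => wd k n x).
Proof.
  intros Hk. destruct (bound_sym k (Rabs x) (Rabs_pos x) Hk) as [M [M0 HM]].
  pose proof (all_bounds k (Rabs x) M Hk M0 (Rabs_pos x) HM) as B.
  split; [|split].
  - apply exs_le with (Ub (Rabs x) M). intros; apply B; lra. apply Ub_ex; auto using Rabs_pos.
  - apply exs_le with (Wb (Rabs x) M). intros; apply B; lra. apply Wb_ex; auto using Rabs_pos.
  - apply exs_le with (WDb (Rabs x) M). intros; apply B; lra. apply WDb_ex; auto using Rabs_pos.
Qed.

Lemma exist0 (k : R -> R) : (forall s, continuous k s) ->
  exists Z W : R -> R, (forall t, is_derive Z t (W t)) /\ (forall t, is_derive W t (- k t * Z t)) /\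
    Z 0 = 0 /\ W 0 = 1.
Proof.
  intros Hk.
  exists (fun x => Series (fun n => uu k n x)), (fun x => Series (fun n => ww k n x)).
  assert (Der : forall t, is_derive (fun x => Series (fun n => uu k n x)) t (Series (fun n => ww k n t)) /\
     is_derive (fun x => Series (fun n => ww k n x)) t (Series (fun n => wd k n t))).
  { intros t.
    assert (Lp : 0 < Rabs t + 1) by (pose proof (Rabs_pos t); lra).
    set (r := mkposreal _ Lp).
    destruct (bound_sym k (Rabs t + 1) ltac:(lra) Hk) as [M [M0 HM]].
    pose proof (all_bounds k (Rabs t + 1) M Hk M0 ltac:(lra) HM) as B.
    assert (Bl : forall y, Boule 0 r y -> Rabs y <= Rabs t + 1).
    { intros y Hy. unfold Boule in Hy. simpl in Hy. rewrite Rminus_0_r in Hy. lra. }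
    assert (Bt : Boule 0 r t) by (unfold Boule; simpl; rewrite Rminus_0_r; lra).
    split; apply is_derive_Reals.
    - apply (CVU_derivable (SP (uu k)) (SP (ww k)) (fun x => Series (fun n => uu k n x)) (fun x => Series (fun n => ww k n x)) 0 r); auto.
      + apply cvu_series with (Wb (Rabs t + 1) M). intros; apply exs_pt; auto.
        apply Wb_ex; lra. intros; apply Wb_nonneg; lra.
        intros n y Hy. apply B. apply Bl; auto.
      + intros y _. apply exs_uncv. apply exs_pt; auto.
      + intros n y _. apply is_derive_Reals. apply SP_der. intros; apply uw_der; auto.
    - apply (CVU_derivable (SP (ww k)) (SP (wd k)) (fun x => Series (fun n => ww k n x)) (fun x => Series (fun n => wd k n x)) 0 r); auto.
      + apply cvu_series with (WDb (Rabs t + 1) M). intros; apply exs_pt; auto.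
        apply WDb_ex; lra. intros; apply WDb_nonneg; lra.
        intros n y Hy. apply B. apply Bl; auto.
      + intros y _. apply exs_uncv. apply exs_pt; auto.
      + intros n y _. apply is_derive_Reals. apply SP_der. intros; apply uw_der; auto. }
  split; [|split; [|split]].
  - intros t; apply Der.
  - intros t. eapply der_val. apply Der.
    rewrite Series_incr_1 by (apply exs_pt; auto). simpl wd.
    rewrite Rplus_0_l. rewrite <- Series_scal_l. apply Series_ext. intros; ring.
  - transitivity (0 * Series (fun n => uu k n 0)); [|ring].
    rewrite <- Series_scal_l. apply Series_ext. intros; rewrite uu0; ring.
  - rewrite Series_incr_1 by (apply exs_pt; auto). rewrite ww0.
    assert (E : Series (fun n => ww k (S n) 0) = 0 * Series (fun n => ww k n 0)).
    { rewrite <- Series_scal_l. apply Series_ext. intros; rewrite !ww0; ring. }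
    rewrite E. ring.
Qed.



Lemma sum_lt_ext n (a b : nat -> R) : (forall i, (i < n)%nat -> a i = b i) -> sum_lt n a = sum_lt n b.
Proof. induction n; simpl; intros H; auto. rewrite IHn by (intros; apply H; lia). rewrite H by lia. auto. Qed.

Lemma sum_lt_tele n (a b : nat -> R) : sum_lt n (fun i => a i + (b (S i) - b i)) = sum_lt n a + b n - b O.
Proof. induction n; simpl. ring. rewrite IHn. ring. Qed.

Lemma sum_lt_nonneg n (a : nat -> R) : (forall i, (i < n)%nat -> 0 <= a i) -> 0 <= sum_lt n a.
Proof. induction n; simpl; intros H. lra. pose proof (H n ltac:(lia)). pose proof (IHn ltac:(intros; apply H; lia)). lra. Qed.

Lemma sum_lt_zero n (a : nat -> R) : (forall i, (i < n)%nat -> 0 <= a i) -> sum_lt n a = 0 ->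
  forall i, (i < n)%nat -> a i = 0.
Proof.
  induction n; simpl; intros H HS i Hi. lia.
  pose proof (H n ltac:(lia)). pose proof (sum_lt_nonneg n a ltac:(intros; apply H; lia)).
  destruct (Nat.eq_dec i n). subst; lra. apply IHn; [intros; apply H; lia|lra|lia].
Qed.

Lemma exist_a (k : R -> R) a : (forall s, continuous k s) ->
  exists z z1 z2, jacobi_solution k z z1 z2 /\ z a = 0 /\ z1 a = 1.
Proof.
  intros Hk.
  destruct (exist0 (fun s => k (s + a))) as [Z [W [DZ [DW [Z0 W0]]]]].
  { intros s. apply (continuous_comp (fun s => s + a) k). apply cont_plus.
    apply (continuous_id (U:=R_UniformSpace)). apply cont_const. apply Hk. }
  exists (fun t => Z (t - a)), (fun t => W (t - a)), (fun t => - k t * Z (t - a)).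
  split; [|split].
  - intros t. split; [|split].
    + eapply der_val. apply (is_derive_comp Z (fun t => t - a)). apply DZ.
      eapply der_val. apply der_plus. apply der_id. apply der_const. reflexivity.
      unfold scal; simpl; unfold mult; simpl. rewrite Rplus_0_r. apply Rmult_1_l.
    + eapply der_val. apply (is_derive_comp W (fun t => t - a)). apply DW.
      eapply der_val. apply der_plus. apply der_id. apply der_const. reflexivity.
      unfold scal; simpl; unfold mult; simpl. rewrite Rplus_0_r, Rmult_1_l. assert (E : t - a + a = t) by lra. rewrite E. reflexivity.
    + ring.
  - simpl. replace (a - a) with 0 by ring. auto.
  - simpl. replace (a - a) with 0 by ring. auto.
Qed.

Lemma part_bounds T n (t : nat -> R) : t O = - T -> t n = T ->
  (forall i, (i < n)%nat -> t i < t (S i)) -> forall i, (i <= n)%nat -> - T <= t i <= T.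
Proof.
  intros H0 Hn Hinc.
  assert (Lo : forall i, (i <= n)%nat -> - T <= t i).
  { induction i; intros Hi. lra. pose proof (Hinc i ltac:(lia)). pose proof (IHi ltac:(lia)). lra. }
  assert (Up : forall j i, (i + j = n)%nat -> t i <= T).
  { induction j; intros i Hi. replace i with n by lia. lra.
    pose proof (Hinc i ltac:(lia)). pose proof (IHj (S i) ltac:(lia)). lra. }
  intros i Hi. split. apply Lo; auto. apply (Up (n - i)%nat). lia.
Qed.

Lemma cover n (t : nat -> R) : (forall i, (i < n)%nat -> t i < t (S i)) ->
  forall m, (m <= n)%nat -> (0 < m)%nat -> forall x, t O <= x <= t m ->
  exists i, (i < m)%nat /\ t i <= x <= t (S i).
Proof.
  intros Hinc m. induction m; intros Hm Hm0 x Hx. lia.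
  destruct (Nat.eq_dec m 0). subst. exists O. split; auto.
  destruct (Rle_dec x (t m)).
  - destruct (IHm ltac:(lia) ltac:(lia) x ltac:(lra)) as [i [Hi1 Hi2]]. exists i; split; auto.
  - exists m. split. lia. lra.
Qed.

Lemma sum_lt_zero_eq n (a : nat -> R) : (forall i, (i < n)%nat -> a i = 0) -> sum_lt n a = 0.
Proof. induction n; simpl; intros H. auto. rewrite IHn by (intros; apply H; lia). rewrite H by lia. ring. Qed.

Lemma dir1 (SM : Type) (kappa : SM -> R -> R)
  (Hk : forall v s, continuous (kappa v) s) :
  no_conjugate_points kappa ->
  (forall (v : SM) (T : R), 0 < T ->
   forall (f : R -> R) (n : nat) (t : nat -> R) (g g1 g2 : nat -> R -> R),
   pw_C2_rep T f n t g g1 g2 -> f (- T) = 0 -> f T = 0 ->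
   0 <= index_form (kappa v) n t g g1 /\
   (index_form (kappa v) n t g g1 = 0 <-> (forall x, - T <= x <= T -> f x = 0))).
Proof.
  intros NCP v T HT f n t g g1 g2 [Hn [H0 [HnT [Hinc [HC2 Hf]]]]] fmT fT.
  set (k := kappa v).
  destruct (exist_a k (-T-1) (Hk v)) as [z [z1 [z2 [J [za z1a]]]]].
  assert (Dz : forall s, is_derive z s (z1 s)) by (intros; apply J).
  assert (Dz1 : forall s, is_derive z1 s (z2 s)) by (intros; apply J).
  assert (Ez : forall s, z2 s + k s * z s = 0) by (intros; apply J).
  assert (NT : exists s, z s <> 0).
  { apply NNPP. intros Hc.
    assert (A : forall y, z y = 0) by (intros y; apply NNPP; intros Hy; apply Hc; exists y; auto).
    assert (z1 (-T-1) = 0).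
    { apply (deriv_zero_interior z (-T-2) (-T) (-T-1)); auto. lra. }
    lra. }
  assert (nz : forall x, - T <= x <= T -> z x <> 0).
  { intros x Hx zx. pose proof (NCP v z z1 z2 J NT x (-T-1) zx za). lra. }
  pose proof (part_bounds T n t H0 HnT Hinc) as PB.
  assert (PC : forall i, (i < n)%nat ->
     RInt (fun s => g1 i s ^2 - k s * g i s ^2) (t i) (t (S i)) =
     RInt (fun s => (g1 i s - g i s * z1 s / z s)^2) (t i) (t (S i))
     + (g i (t (S i)) ^2 * z1 (t (S i)) / z (t (S i)) - g i (t i) ^2 * z1 (t i) / z (t i)) /\
     0 <= RInt (fun s => (g1 i s - g i s * z1 s / z s)^2) (t i) (t (S i)) /\
     (forall x, t i <= x <= t (S i) -> continuous (fun s => (g1 i s - g i s * z1 s / z s)^2) x)).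
  { intros i Hi. pose proof (HC2 i Hi) as C2.
    apply (picone k z z1 z2 (g i) (g1 i) (g2 i)); auto.
    apply (Hk v). intros s; apply C2. intros s; apply C2.
    intros s Hs. apply nz. pose proof (PB i ltac:(lia)). pose proof (PB (S i) ltac:(lia)). lra. }
  set (A := fun i => RInt (fun s => (g1 i s - g i s * z1 s / z s)^2) (t i) (t (S i))).
  set (bb := fun i => f (t i) ^ 2 * z1 (t i) / z (t i)).
  assert (IF : index_form k n t g g1 = sum_lt n A).
  { unfold index_form. rewrite (sum_lt_ext n _ (fun i => A i + (bb (S i) - bb i))).
    - rewrite sum_lt_tele. unfold bb. rewrite HnT, H0, fT, fmT. field.
      split; apply nz; lra.
    - intros i Hi. destruct (PC i Hi) as [E _]. rewrite E. unfold A, bb.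
      pose proof (Hinc i Hi).
      rewrite (Hf i Hi (t i)) by lra. rewrite (Hf i Hi (t (S i))) by lra. reflexivity. }
  assert (A0 : forall i, (i < n)%nat -> 0 <= A i) by (intros i Hi; apply (PC i Hi)).
  rewrite IF. split. apply sum_lt_nonneg; auto.
  split.
  - intros HS x Hx.
    assert (Az : forall i, (i < n)%nat -> A i = 0) by (apply sum_lt_zero; auto).
    assert (Piece : forall i, (i < n)%nat -> f (t i) = 0 -> forall x, t i <= x <= t (S i) -> f x = 0).
    { intros i Hi Hfi y Hy. pose proof (Hinc i Hi) as Hlt.
      destruct (PC i Hi) as [_ [_ CQ]].
      assert (Q0 := RInt_zero_nonneg _ _ _ Hlt CQ (fun x _ => pow2_ge_0 _) (Az i Hi)).
      assert (nzi : forall x, t i <= x <= t (S i) -> z x <> 0).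
      { intros x0 Hx0. apply nz. pose proof (PB i ltac:(lia)). pose proof (PB (S i) ltac:(lia)). lra. }
      assert (Cst := const_of_deriv0 (fun x => g i x * / z x) (t i) (t (S i)) (Rlt_le _ _ Hlt)).
      assert (Der : forall x, t i <= x <= t (S i) -> is_derive (fun x => g i x * / z x) x 0).
      { intros x0 Hx0. eapply der_val. apply (der_mult (g i) (fun x => / z x)).
        apply (HC2 i Hi). apply der_inv. apply Dz. apply nzi; auto.
        pose proof (Q0 x0 Hx0) as Qx. simpl in Qx. rewrite Rmult_1_r in Qx.
        apply Rmult_integral in Qx. assert (G1 : g1 i x0 = g i x0 * z1 x0 / z x0) by (destruct Qx; lra).
        rewrite G1. field. apply nzi; auto. }
      specialize (Cst Der y Hy). simpl in Cst.
      rewrite (Hf i Hi y Hy). rewrite <- (Hf i Hi (t i)) in Cst by lra. rewrite Hfi in Cst.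
      pose proof (nzi y Hy).
      replace (g i y) with (g i y * / z y * z y) by (field; auto). rewrite Cst. ring. }
    assert (All : forall i, (i < n)%nat -> forall x, t i <= x <= t (S i) -> f x = 0).
    { induction i; intros Hi. apply Piece; auto. rewrite H0; auto.
      apply Piece; auto. apply IHi. lia. pose proof (Hinc i ltac:(lia)). lra. }
    destruct (cover n t Hinc n (le_n n) Hn x ltac:(rewrite H0, HnT; lra)) as [i [Hi Hxi]].
    apply (All i Hi); auto.
  - intros Hz. apply sum_lt_zero_eq. intros i Hi. unfold A.
    pose proof (Hinc i Hi) as Hlt.
    assert (Gz : forall y, t i < y < t (S i) -> g i y = 0).
    { intros y Hy. rewrite <- (Hf i Hi y) by lra. apply Hz. pose proof (PB i ltac:(lia)). pose proof (PB (S i) ltac:(lia)). lra. }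
    rewrite <- (RInt_zero (t i) (t (S i))). apply RInt_ext.
    intros y Hy. rewrite Rmin_left in Hy by lra. rewrite Rmax_right in Hy by lra.
    rewrite (Gz y Hy). rewrite (deriv_zero_interior (g i) (t i) (t (S i)) y (g1 i y) Gz Hy). match goal with |- ?a = ?b => change (@eq R a b) end; field; apply nz; pose proof (PB i ltac:(lia)); pose proof (PB (S i) ltac:(lia)); lra.
    apply (HC2 i Hi).
Qed.

Lemma core2 (SM : Type) (kappa : SM -> R -> R)
  (Hk : forall v s, continuous (kappa v) s) :
  (forall (v : SM) (T : R), 0 < T ->
   forall (f : R -> R) (n : nat) (t : nat -> R) (g g1 g2 : nat -> R -> R),
   pw_C2_rep T f n t g g1 g2 -> f (- T) = 0 -> f T = 0 ->
   0 <= index_form (kappa v) n t g g1 /\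
   (index_form (kappa v) n t g g1 = 0 <-> (forall x, - T <= x <= T -> f x = 0))) ->
  forall v z z1 z2 t1 t2, jacobi_solution (kappa v) z z1 z2 -> z t1 = 0 -> z t2 = 0 -> t1 < t2 ->
  forall t, z t = 0.
Proof.
  intros HI v z z1 z2 t1 t2 J Z1 Z2 H12.
  set (k := kappa v).
  assert (Dz : forall s, is_derive z s (z1 s)) by (intros; apply J).
  assert (Dz1 : forall s, is_derive z1 s (z2 s)) by (intros; apply J).
  assert (Ez : forall s, z2 s + k s * z s = 0) by (intros; apply J).
  set (T := Rabs t1 + Rabs t2 + 1).
  assert (B1 : - T < t1 /\ t2 < T).
  { unfold T. pose proof (Rabs_pos t1). pose proof (Rabs_pos t2).
    pose proof (Rle_abs t2). pose proof (Rle_abs (- t1)). rewrite Rabs_Ropp in *. lra. }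
  assert (HT : 0 < T) by (unfold T; pose proof (Rabs_pos t1); pose proof (Rabs_pos t2); lra).
  set (tt := fun i => match i with 0%nat => -T | 1%nat => t1 | 2%nat => t2 | _ => T end).
  set (gg := fun i => match i with 1%nat => z | _ => fun _ : R => 0 end).
  set (gg1 := fun i => match i with 1%nat => z1 | _ => fun _ : R => 0 end).
  set (gg2 := fun i => match i with 1%nat => z2 | _ => fun _ : R => 0 end).
  set (ff := fun x => if Rle_dec t1 x then if Rle_dec x t2 then z x else 0 else 0).
  assert (C0 : C2_with (fun _ : R => 0) (fun _ => 0) (fun _ => 0)).
  { intros x. split; [apply der_const|split; [apply der_const|apply cont_const]]. }
  assert (Rep : pw_C2_rep T ff 3 tt gg gg1 gg2).
  { split; [lia|split; [reflexivity|split; [reflexivity|split; [|split]]]].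
    - intros i Hi. destruct i as [|[|[|i]]]; simpl; lra || lia.
    - intros i Hi. destruct i as [|[|[|i]]]; simpl; auto; try lia.
      intros x. split; auto. split; auto.
      apply cont_ext with (fun s => - (k s * z s)). intros y. pose proof (Ez y); lra.
      apply cont_opp. apply cont_mult. apply Hk. apply (cont_der _ _ _ (Dz x)).
    - intros i Hi x Hx. unfold ff. destruct i as [|[|[|i]]]; simpl in Hx |- *; try lia.
      + destruct (Rle_dec t1 x); auto. destruct (Rle_dec x t2); auto. replace x with t1 by lra; auto.
      + destruct (Rle_dec t1 x); [|lra]. destruct (Rle_dec x t2); [auto|lra].
      + destruct (Rle_dec t1 x); auto. destruct (Rle_dec x t2); auto. replace x with t2 by lra; auto. }
  assert (F1 : ff (- T) = 0) by (unfold ff; destruct (Rle_dec t1 (-T)); [lra|auto]).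
  assert (F2 : ff T = 0) by (unfold ff; destruct (Rle_dec t1 T); auto; destruct (Rle_dec T t2); [lra|auto]).
  destruct (HI v T HT ff 3%nat tt gg gg1 gg2 Rep F1 F2) as [_ [Heq _]].
  assert (R0 : forall a b, RInt (fun s => 0 ^ 2 - kappa v s * 0 ^ 2) a b = 0).
  { intros a b. transitivity (RInt (fun _ => 0) a b); [|apply RInt_zero]. apply RInt_ext. intros.
    match goal with |- ?a = ?b => change (@eq R a b) end; ring. }
  assert (R1 : RInt (fun s => z1 s ^ 2 - kappa v s * z s ^ 2) t1 t2 = 0).
  { apply is_RInt_unique. replace 0 with (z t2 * z1 t2 - z t1 * z1 t1) by (rewrite Z1, Z2; ring).
    apply (RInt_FTC (fun s => z s * z1 s)).
    - intros x _. eapply der_val. apply der_mult. apply Dz. apply Dz1.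
      assert (E : z2 x = - k x * z x) by (pose proof (Ez x); lra). rewrite E. unfold k. ring.
    - intros x _. apply cont_minus. apply cont_sq. apply (cont_der _ _ _ (Dz1 x)).
      apply cont_mult. apply Hk. apply cont_sq. apply (cont_der _ _ _ (Dz x)). }
  assert (IZ : index_form (kappa v) 3 tt gg gg1 = 0).
  { cbv [index_form sum_lt tt gg gg1]. rewrite R0, R0, R1. ring. }
  specialize (Heq IZ).
  assert (Zin : forall y, t1 < y < t2 -> z y = 0).
  { intros y Hy. pose proof (Heq y ltac:(lra)) as E. unfold ff in E.
    destruct (Rle_dec t1 y); [|lra]. destruct (Rle_dec y t2); [auto|lra]. }
  set (m := (t1 + t2) / 2).
  assert (Hm : t1 < m < t2) by (unfold m; lra).
  apply (uniq k z z1 z2 m (Hk v) Dz Dz1 Ez).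
  apply Zin; auto.
  apply (deriv_zero_interior z t1 t2 m); auto.
Qed.

Theorem lemma2p4 (SM : Type) (kappa : SM -> R -> R)
  (Hk : forall v s, continuous (kappa v) s) :
  no_conjugate_points kappa <->
  (forall (v : SM) (T : R), 0 < T ->
   forall (f : R -> R) (n : nat) (t : nat -> R) (g g1 g2 : nat -> R -> R),
   pw_C2_rep T f n t g g1 g2 -> f (- T) = 0 -> f T = 0 ->
   0 <= index_form (kappa v) n t g g1 /\
   (index_form (kappa v) n t g g1 = 0 <-> (forall x, - T <= x <= T -> f x = 0))).
Proof.
  split. apply dir1; auto.
  intros HI v z z1 z2 J [t0 Ht0] t1 t2 Z1 Z2.
  destruct (Rtotal_order t1 t2) as [Hlt|[Heq|Hgt]]; auto; exfalso; apply Ht0.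
  - apply (core2 SM kappa Hk HI v z z1 z2 t1 t2 J Z1 Z2 Hlt).
  - apply (core2 SM kappa Hk HI v z z1 z2 t2 t1 J Z2 Z1 Hgt).
Qed.
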